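(* Let $n\ge2$ and $\sigma\ge2$ be integers, and let $s$ be a random string of length $n$ whose characters are drawn independently and uniformly from an alphabet of size $\sigma$. Set $p=(\sigma-1)/\sigma$, let $r(s)$ be the number of maximal runs of $s$, and let $k$ be the number of tokens of $\mathcal{F}(s)$. Then $r(s)-1\sim\mathrm{Bin}(n-1,p)$ and \[\mathbb{E}[k]=1+\frac{1+(n-1)p}{2}+\frac{1+\bigl((2-\sigma)/\sigma\bigr)^{n-1}}{4}=\frac{n(\sigma-1)}{2\sigma}+O(1).\]
   Context: A maximal run of a string is a maximal block of consecutive equal symbols. Let $\texttt{@},\texttt{\$}$ be two distinct symbols not in the alphabet. For a string $s$ of length $n$ let $\hat s=\texttt{@}\,s\,\texttt{\$}$ (positions $1,\dots,n+2$); $\hat s[i..j)$ is the substring at positions $i,\dots,j-1$. The leading (trailing) run of a non-empty string is its longest prefix (suffix) consisting of one repeated symbol. The Flashback decomposition $\mathcal{F}(s)$ is the sequence of tokens (pairs $(\sigma,p)$) produced as follows, starting from active span $[lo,hi)=[1,n+3)$: if $lo\ge hi$, stop. Let $\ell$ be the length of the leading run of $\hat s[lo..hi)$. If $\ell=hi-lo$, append $(\hat s[lo..hi),0)$ and stop. Otherwise let $\hat s[r..hi)$ be the trailing run of $\hat s[lo..hi)$ and $\sigma=\hat s[lo..lo+\ell)\cdot\hat s[r..hi)$; if $lo+\ell\ge r$, append $(\sigma,0)$ and stop; otherwise append $(\sigma,\ell)$ and repeat with active span $[lo+\ell,r)$. *)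

(* Defs.v *)
From HB Require Import structures.
From mathcomp Require Import all_boot all_order all_algebra.
Set Implicit Arguments. Unset Strict Implicit. Unset Printing Implicit Defensive.
Import Order.TTheory GRing.Theory Num.Theory.

(* Extended alphabet: the sentinels @ and $ plus the original symbols. *)
Inductive ext (T : Type) := At | Dol | Chr of T.
Arguments At {T}. Arguments Dol {T}.

Definition ext_eqb (T : eqType) (a b : ext T) : bool :=
  match a, b with
  | At, At => true | Dol, Dol => true
  | Chr x, Chr y => x == y | _, _ => false end.
Lemma ext_eqP (T : eqType) : Equality.axiom (@ext_eqb T).
Proof. by case=> [||x] [||y] /=; try constructor => //; apply: (iffP eqP) => [->|[]]. Qed.
HB.instance Definition _ (T : eqType) := hasDecEq.Build (ext T) (@ext_eqP T).

Definition hat (T : Type) (s : seq T) : seq (ext T) := At :: rcons (map (@Chr T) s) Dol.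

Definition lead_len (X : eqType) (u : seq X) : nat :=
  match u with [::] => 0 | x :: _ => find (predC1 x) u end.
Definition trail_len (X : eqType) (u : seq X) : nat := lead_len (rev u).

(* The Flashback loop on the active substring u = hat s[lo..hi);
   fuel bounds the number of iterations (size u + 1 suffices, since each
   non-final step strictly shrinks the span). *)
Fixpoint flash_aux (X : eqType) (fuel : nat) (u : seq X) : seq (seq X * nat) :=
  match fuel with
  | 0 => [::]
  | fuel'.+1 =>
    if u is [::] then [::] else
    let l := lead_len u in
    if l == size u then [:: (u, 0)] else
    let r := size u - trail_len u in
    let sigma := take l u ++ drop r u in
    if r <= l then [:: (sigma, 0)]
    else (sigma, l) :: flash_aux fuel' (take (r - l) (drop l u))
  end.

Definition flashback (T : eqType) (s : seq T) : seq (seq (ext T) * nat) :=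
  flash_aux (size (hat s)).+1 (hat s).

Fixpoint runs_aux (X : eqType) (fuel : nat) (u : seq X) : nat :=
  match fuel with
  | 0 => 0
  | fuel'.+1 => if u is [::] then 0 else (runs_aux fuel' (drop (lead_len u) u)).+1
  end.
Definition runs (X : eqType) (u : seq X) : nat := runs_aux (size u) u.

Local Open Scope ring_scope.
Definition Pr (T : finType) (P : pred T) : rat :=
  (\sum_(x : T | P x) 1) / #|T|%:R.
Definition Ex (T : finType) (X : T -> nat) : rat :=
  (\sum_(x : T) (X x)%:R) / #|T|%:R.

(* Main.v *)
Require Import Defs.
From mathcomp Require Import all_boot all_order all_algebra.
From mathcomp Require Import zify ring lra.
Import Order.TTheory GRing.Theory Num.Theory.
Set Implicit Arguments. Unset Strict Implicit.

Section Comb.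
Variable X : eqType.

Fixpoint rcf (x : X) (t : seq X) : nat :=
  if t is y :: t' then (x != y) + rcf y t' else 0.
Definition rc (u : seq X) : nat := if u is x :: t then (rcf x t).+1 else 0.

Lemma rcf_cat (x : X) a b : rcf x (a ++ b) = rcf x a + rcf (last x a) b.
Proof. elim: a x => [|y a IH] x //=. by rewrite IH addnA. Qed.

Lemma rcf_const (x : X) a : all (pred1 x) a -> rcf x a = 0.
Proof. elim: a => [|y a IH] //= /andP [/eqP -> H]. by rewrite eqxx IH. Qed.

Lemma last_const (x : X) a : all (pred1 x) a -> last x a = x.
Proof. elim: a => [|y a IH] //= /andP [/eqP -> H]. by rewrite IH. Qed.

Lemma rc_const (y : X) v : all (pred1 y) v -> v != [::] -> rc v = 1.
Proof. case: v => [|z v] //= /andP [/eqP -> H] _. by rewrite rcf_const. Qed.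

Lemma rc_lead (x : X) c v : all (pred1 x) c -> (v == [::]) || (head x v != x) ->
  rc (x :: c ++ v) = (rc v).+1.
Proof.
move=> Hc Hv /=; rewrite rcf_cat rcf_const // last_const // add0n.
by case: v Hv => [|z v] //= /negbTE; rewrite eq_sym => ->.
Qed.

Lemma rc_trail (y : X) w c : all (pred1 y) c -> c != [::] -> w != [::] -> last y w != y ->
  rc (w ++ c) = (rc w).+1.
Proof.
case: c => [|y' c] //= /andP [/eqP -> Hc] _.
case: w => [|a w] //= _ Hl. by rewrite rcf_cat /= Hl (@rcf_const y c Hc) addn0 addn1.
Qed.

Lemma rc_cons (x : X) y t : rc (x :: y :: t) = (x != y) + rc (y :: t).
Proof. by rewrite /= addnS. Qed.

Lemma lead_split (x : X) t : exists c v, [/\ t = c ++ v, all (pred1 x) c,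
   (v == [::]) || (head x v != x) & size c = find (predC1 x) t].
Proof.
elim: t => [|y t [c [v [E Hc Hv Hs]]]]; first by exists [::], [::].
case: (eqVneq y x) => [Eyx|Nyx].
  exists (y :: c), v; split => //=; first by rewrite E.
    by rewrite Eyx eqxx.
  by rewrite Eyx eqxx /= Hs.
exists [::], (y :: t); split => //=. by rewrite Nyx.
Qed.

Lemma lead_lenE (x : X) t : lead_len (x :: t) = (find (predC1 x) t).+1.
Proof. by rewrite /lead_len /= eqxx. Qed.

Lemma runs_auxE f u : size u <= f -> runs_aux f u = rc u.
Proof.
elim: f u => [|f IH] [|x t] //= Hs.
rewrite eqxx /= IH; last by rewrite size_drop; apply: leq_trans (leq_subr _ _) _.
have [c [v [E Hc Hv Hsz]]] := lead_split x t.
by rewrite -Hsz E drop_size_cat // -(@rc_lead x c v Hc Hv).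
Qed.

Lemma runsE u : runs u = rc u.
Proof. exact: runs_auxE. Qed.


Lemma flashE f (u : seq X) : size u < f -> size (flash_aux f u) = uphalf (rc u).
Proof.
elim: f u => [|f IH] // [|x t] // Hs.
have [c [v [E Hc Hv Hsz]]] := lead_split x t.
rewrite -[RHS]/(uphalf (rc (x :: t))).
rewrite /= eqxx /= -Hsz -[(size t).+1]/(size (x :: t)).
have Hu : x :: t = (x :: c) ++ v by rewrite E.
move: Hs Hu; set u := x :: t => Hs Hu.
have Hsu : size u = (size c).+1 + size v by rewrite Hu size_cat.
have Hdl : drop (size c).+1 u = v by rewrite Hu -[(size c).+1]/(size (x :: c)) drop_size_cat.
have Htl : take (size c).+1 u = x :: c by rewrite Hu -[(size c).+1]/(size (x :: c)) take_size_cat.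
case Er : (rev u) => [|y t']; first by move: (f_equal size Er); rewrite size_rev Hsu.
have [c2 [v2 [E2 Hc2 Hv2 Hsz2]]] := lead_split y t'.
have Htr : trail_len u = (size c2).+1 by rewrite /trail_len Er lead_lenE Hsz2.
have Hu2 : u = rev v2 ++ rev (y :: c2) by rewrite -(revK u) Er E2 -cat_cons rev_cat.
have Hsr : size u - (size c2).+1 = size v2.
  by rewrite Hu2 size_cat !size_rev addnK.
have Hdr : drop (size v2) u = rev (y :: c2) by rewrite Hu2 -(size_rev v2) drop_size_cat.
have Htr2 : take (size v2) u = rev v2 by rewrite Hu2 -(size_rev v2) take_size_cat.
have HcR : all (pred1 y) (rev (y :: c2)) by rewrite all_rev /= eqxx.
rewrite Htr Hsr -[RHS]/(uphalf (rc u)).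
have -> : drop (size c) t = v by rewrite E drop_size_cat.
case: eqP => Hlu.
  have Hv0 : v = [::] by apply/nilP; rewrite /nilp -(eqn_add2l (size c).+1) addn0 -Hsu Hlu.
  by rewrite Hu Hv0 cats0 (@rc_const x) //= eqxx.
have Hvn : v != [::].
  by apply/eqP => Hv0; apply: Hlu; rewrite Hsu Hv0 addn0.
have Hrcu : rc u = (rc v).+1 by rewrite Hu (@rc_lead x c v Hc Hv).
case: leqP => Hrl.
  have Hvd : v = drop ((size c).+1 - size v2) (rev (y :: c2)).
    by rewrite -Hdr drop_drop subnK // Hdl.
  have Hva : all (pred1 y) v.
    move: HcR; rewrite -(cat_take_drop ((size c).+1 - size v2) (rev (y :: c2))) all_cat.
    by rewrite -Hvd => /andP [].
  by rewrite Hrcu (@rc_const y v Hva Hvn).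
set mid := take (size v2 - (size c).+1) v.
have Hmid : take (size v2) u = (x :: c) ++ mid.
  by rewrite -(subnKC (ltnW Hrl)) takeD Htl Hdl.
have Hv2n : v2 != [::] by case: (v2) Hrl.
have Hlast : last y (rev v2) != y.
  case: (v2) Hv2 Hv2n => [|z w] //= Hz _. by rewrite rev_cons last_rcons.
have Hmh : (mid == [::]) || (head x mid != x).
  rewrite /mid; case: (v) Hv Hvn => [|z w] //= Hz _.
  by case: (size v2 - (size c).+1) (subn_gt0 (size c).+1 (size v2)) Hrl => [|k] //= ->.
have Hrc : rc u = (rc mid).+2.
  have Hcn : rev (y :: c2) != [::] by rewrite -size_eq0 size_rev.
  have Hv2r : rev v2 != [::] by rewrite -size_eq0 size_rev size_eq0.
  rewrite -(cat_take_drop (size v2) u) Htr2 Hdr (@rc_trail y _ _ HcR Hcn Hv2r Hlast).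
  by rewrite -Htr2 Hmid (@rc_lead x c mid Hc Hmh).
rewrite Hrc /= IH //.
rewrite /mid size_take.
by case: ifP => _; move: Hs; rewrite Hsu; lia.
Qed.
End Comb.
Lemma rcf_map (T : eqType) (a : T) s : rcf (Chr a) (map (@Chr T) s) = rcf a s.
Proof. by elim: s a => [|b s IH] a //=; rewrite IH. Qed.

Lemma rc_hat (T : eqType) (s : seq T) : s != [::] -> rc (hat s) = (rc s).+2.
Proof.
case: s => [|a s] //= _.
rewrite -cats1 rcf_cat rcf_map last_map /=.
by rewrite add1n addn0 addn1.
Qed.

Lemma size_flashback (T : eqType) (s : seq T) : s != [::] ->
  size (flashback s) = (uphalf (rc s)).+1.
Proof.
move=> Hs; rewrite /flashback flashE // rc_hat //.
Qed.

Local Open Scope ring_scope.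

Lemma sum_tuple_cons (T : finType) n (F : seq T -> rat) :
  \sum_(t : n.+1.-tuple T) F t = \sum_(t : n.-tuple T) \sum_(x : T) F (x :: t).
Proof.
rewrite pair_big /=.
rewrite (reindex (fun p : n.-tuple T * T => [tuple of p.2 :: p.1])) /=.
  by apply: eq_bigr => -[t x].
exists (fun t : n.+1.-tuple T => (behead_tuple t, thead t)).
  move=> p _ /=; case: p => t x; congr pair; first by apply: val_inj.
move=> t _ /=; by rewrite [RHS]tuple_eta.
Qed.

Lemma sum_neq (T : finType) (y : T) (G : bool -> rat) :
  \sum_(x : T) G (x != y) = G false + (#|T|.-1)%:R * G true.
Proof.
rewrite (bigD1 y) //= eqxx; congr (_ + _).
rewrite (eq_bigr (fun _ => G true)) => [|x /negbTE]; last by rewrite /negb => ->.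
by rewrite sumr_const mulr_natl -(cardC1 y).
Qed.

Lemma step (T : finType) n (g : nat -> rat) :
  \sum_(t : n.+2.-tuple T) g (rc t).-1 =
  \sum_(t : n.+1.-tuple T) (g (rc t).-1 + (#|T|.-1)%:R * g ((rc t).-1).+1).
Proof.
rewrite (@sum_tuple_cons _ _ (fun s => g (rc s).-1)); apply: eq_bigr => -[[|y s] Hs] _ //=.
by rewrite (sum_neq y (fun b : bool => g (b + rcf y s)%N)).
Qed.

Lemma base (T : finType) (g : nat -> rat) :
  \sum_(t : 1.-tuple T) g (rc t).-1 = #|T|%:R * g 0%N.
Proof.
rewrite (@sum_tuple_cons _ 0 (fun s => g (rc s).-1)).
rewrite (eq_bigr (fun _ => #|T|%:R * g 0%N)) => [|t _].
  by rewrite sumr_const card_tuple expn0.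
by rewrite (tuple0 t) /= sumr_const mulr_natl.
Qed.

Lemma count_runs (T : finType) n j :
  \sum_(t : n.+1.-tuple T) (((rc t).-1 == j)%:R : rat) =
  ('C(n, j) * #|T| * (#|T|.-1) ^ j)%:R.
Proof.
elim: n j => [|n IH] j.
  have H := base T (fun r => ((r == j)%:R : rat)); simpl in H; rewrite H.
  by case: j {H} => [|j]; [rewrite mulr1 muln1 mul1n | rewrite mulr0].
have H := step T n (fun r => ((r == j)%:R : rat)); simpl in H; rewrite H.
rewrite big_split /= -mulr_sumr IH.
case: j {H} => [|j].
  rewrite big1 // mulr0 addr0 !bin0. done.
rewrite IH binS -natrM -natrD; congr (_%:R); rewrite expnS; ring.
Qed.

Lemma sum_B (T : finType) n : (0 < #|T|)%N ->
  \sum_(t : n.+1.-tuple T) (((rc t).-1)%:R : rat) = (n * #|T|.-1 * #|T| ^ n)%:R.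
Proof.
case Hk: #|T| => [|d] // _.
elim: n => [|n IH].
  have H := base T (fun r => (r%:R : rat)); simpl in H; rewrite H.
  by rewrite mulr0 !mul0n.
have H := step T n (fun r => (r%:R : rat)); simpl in H; rewrite H.
rewrite big_split /= -mulr_sumr IH Hk /=.
rewrite (eq_bigr (fun t : n.+1.-tuple T => ((rc t).-1)%:R + 1)) => [|t _]; last by rewrite natr1.
rewrite big_split /= IH sumr_const card_tuple Hk.
rewrite !(natrM, natrX, natrD, mulrS) exprS; ring.
Qed.

Lemma sum_sign (T : finType) n :
  \sum_(t : n.+1.-tuple T) ((-1) ^+ (rc t).-1 : rat) = #|T|%:R * (1 - (#|T|.-1)%:R) ^+ n.
Proof.
elim: n => [|n IH].
  have H := base T (fun r => ((-1) ^+ r : rat)); simpl in H; rewrite H.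
  by rewrite !expr0.
have H := step T n (fun r => ((-1) ^+ r : rat)); simpl in H; rewrite H.
rewrite (eq_bigr (fun t : n.+1.-tuple T => (1 - (#|T|.-1)%:R) * (-1) ^+ (rc t).-1)) => [|t _].
  by rewrite -mulr_sumr IH exprS; ring.
rewrite exprS; ring.
Qed.

Lemma k_formula (T : eqType) (s : seq T) : s != [::] ->
  ((size (flashback s))%:R : rat) =
  7%:R / 4%:R + ((rc s).-1)%:R / 2%:R + (-1) ^+ ((rc s).-1) / 4%:R.
Proof.
move=> Hs; rewrite size_flashback //.
case: s Hs => [|a s] //= _.
rewrite -signr_odd.
move: (odd_double_half (rcf a s)); move: (odd (rcf a s)) ((rcf a s)./2) => b h <-.
case: b => /=; rewrite -muln2 -addn2 !(natrD, natrM) ?expr1 ?expr0; lra.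
Qed.

Local Open Scope ring_scope.

Theorem theorem5p2 (sigma : nat) (Hsigma : (2 <= sigma)%N) :
  let p : rat := (sigma%:R - 1) / sigma%:R in
  (forall n : nat, (2 <= n)%N ->
     (forall j : nat,
        Pr (fun s : n.-tuple 'I_sigma => (runs (val s)).-1 == j)
        = ('C(n.-1, j))%:R * p ^+ j * (1 - p) ^+ (n.-1 - j)) /\
     Ex (fun s : n.-tuple 'I_sigma => size (flashback (val s)))
     = 1 + (1 + (n.-1)%:R * p) / 2%:R
         + (1 + ((2%:R - sigma%:R) / sigma%:R) ^+ n.-1) / 4%:R) /\
  (exists C : rat, forall n : nat, (2 <= n)%N ->
     `| Ex (fun s : n.-tuple 'I_sigma => size (flashback (val s)))
        - n%:R * (sigma%:R - 1) / (2%:R * sigma%:R) | <= C).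
Proof.
move=> p.
have Hs0 : sigma%:R != 0 :> rat by rewrite pnatr_eq0; case: (sigma) Hsigma.
have Hd : sigma.-1%:R = sigma%:R - 1 :> rat.
  by rewrite -subn1 natrB // ltnW.
have HX : forall k, sigma%:R ^+ k != 0 :> rat by move=> k; rewrite expf_neq0.
have P1 : forall n : nat, (2 <= n)%N ->
     (forall j : nat,
        Pr (fun s : n.-tuple 'I_sigma => (runs (val s)).-1 == j)
        = ('C(n.-1, j))%:R * p ^+ j * (1 - p) ^+ (n.-1 - j)) /\
     Ex (fun s : n.-tuple 'I_sigma => size (flashback (val s)))
     = 1 + (1 + (n.-1)%:R * p) / 2%:R
         + (1 + ((2%:R - sigma%:R) / sigma%:R) ^+ n.-1) / 4%:R.
  case=> [|m] // Hm /=; split.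
    move=> j; rewrite /Pr.
    have E1 : \sum_(s : m.+1.-tuple 'I_sigma | (runs s).-1 == j) (1:rat) =
              \sum_(s : m.+1.-tuple 'I_sigma) (((rc s).-1 == j)%:R).
      rewrite big_mkcond; apply: eq_bigr => s _; rewrite runsE; by case: eqP.
    rewrite E1 count_runs card_tuple !card_ord.
    case: (leqP j m) => Hj; last by rewrite bin_small // !mul0n !mul0r.
    have Hp1 : 1 - p = sigma%:R^-1 by rewrite /p; field.
    rewrite Hp1 exprVn /p expr_div_n.
    move: (subnKC Hj); move: (m - j)%N => e <-.
    rewrite addnC expnS expnD !natrM !natrX Hd.
    by field; rewrite Hs0 !HX.
  rewrite /Ex.
  rewrite (eq_bigr (fun s : m.+1.-tuple 'I_sigma => 7%:R/4%:R + ((rc s).-1)%:R / 2%:R + (-1) ^+ ((rc s).-1) / 4%:R)) => [|s _]; last first.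
    by rewrite k_formula // -size_eq0 size_tuple.
  rewrite !big_split /= -!mulr_suml sum_B ?card_ord; last by case: (sigma) Hsigma.
  rewrite sum_sign sumr_const card_tuple !card_ord -[_ *+ (sigma ^ m.+1)%N]mulr_natr !natrM !natrX Hd.
  have -> : 1 - (sigma%:R - 1) = 2 - sigma%:R :> rat by ring.
  rewrite /p expr_div_n exprS.
  by field; rewrite Hs0 !HX.
split => //.
have Hs2 : 2 <= sigma%:R :> rat by rewrite ler_nat.
have Hp : p * sigma%:R = sigma%:R - 1 by rewrite /p; field.
have Hp01 : 0 <= p <= 1 by apply/andP; split; nra.
exists 2%:R => n Hn.
have [_ ->] := P1 n Hn.
case: n Hn => [|m] // Hm /=.
set q := (2 - sigma%:R) / sigma%:R.
have Hqs : q * sigma%:R = 2 - sigma%:R by rewrite /q; field.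
have Hq : `|q| <= 1 by rewrite ler_norml; apply/andP; split; nra.
have Ha : `|q ^+ m| <= 1 by rewrite normrX; apply: exprn_ile1.
move: Ha; rewrite ler_norml => /andP [Ha1 Ha2].
have -> : (m.+1)%:R * (sigma%:R - 1) / (2 * sigma%:R) = (m%:R + 1) * p / 2 :> rat.
  by rewrite /p -natr1; field.
rewrite ler_norml; apply/andP; split; move: Hp01 => /andP [? ?]; lra.
Qed.
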